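(* Let $G$ be an $N$-cube Adinkra with heights disregarded. Then $G$ is minimally vertex-transitive up to the bipartition: the only automorphism of $G$ fixing a vertex is the identity permutation, and $|\mathrm{Aut}(G)|=\tfrac12|V|=2^{N-1}$.
   Context: An Adinkra of dimension $N$ is a finite connected simple graph $G=(V,E)$ together with: (1) a bipartition of $V$ into bosons and fermions such that every edge joins a boson and a fermion; (2) a height function (here disregarded); (3) a coloring of $E$ by colors $\{1,\dots,N\}$ such that each vertex is incident to exactly one edge of each color; (4) an edge parity $\pi:E\to\mathbb{Z}_2$ (parity $1$ = dashed). These must satisfy: every path with edge colors $(i,j)$, $i\neq j$, lies in a unique 4-cycle with colors $(i,j,i,j)$, and every such two-colored 4-cycle has an odd number of dashed edges. An $N$-cube Adinkra has $2^N$ vertices. Switching a vertex reverses the parity of all edges incident to it. An automorphism of $G$ is a permutation of $V$ preserving adjacency, edge colors and the bipartition, which becomes parity-preserving after switching some set of vertices; automorphisms are identified when they induce the same permutation of $V$, and $\mathrm{Aut}(G)$ is the group of these permutations. *)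

(* Defs.v *)
From mathcomp Require Import all_boot all_fingroup.
Set Implicit Arguments. Unset Strict Implicit. Unset Printing Implicit Defensive.

Section Adinkra.
Variables (V : finType) (N : nat).
(* Graph data: adjacency relation, bipartition (boson = true, fermion = false),
   edge colouring by colours 'I_N, edge parity (true = dashed).
   col and pi are only meaningful on edges (adj u w). *)
Variables (adj : rel V) (boson : pred V) (col : V -> V -> 'I_N) (pi : V -> V -> bool).

Definition simple_graph : Prop := symmetric adj /\ irreflexive adj.

Definition graph_connected : Prop := forall u w, connect adj u w.

Definition bipartition_ok : Prop := forall u w, adj u w -> boson u != boson w.

Definition coloring_ok : Prop :=
  (forall u w, adj u w -> col u w = col w u) /\
  (forall (v : V) (i : 'I_N), exists! w, adj v w /\ col v w = i).

Definition parity_ok : Prop := forall u w, adj u w -> pi u w = pi w u.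

Definition square_condition : Prop :=
  forall (u v w : V) (i j : 'I_N), i != j ->
    adj u v -> adj v w -> col u v = i -> col v w = j ->
    exists! x, [/\ adj w x, col w x = i, adj x u & col x u = j].

Definition odd_dashing : Prop :=
  forall (u v w x : V) (i j : 'I_N), i != j ->
    adj u v -> adj v w -> adj w x -> adj x u ->
    col u v = i -> col v w = j -> col w x = i -> col x u = j ->
    odd (pi u v + pi v w + pi w x + pi x u).

Definition is_adinkra : Prop :=
  [/\ simple_graph, graph_connected, bipartition_ok, coloring_ok & parity_ok]
  /\ square_condition /\ odd_dashing.

Definition is_Ncube_adinkra : Prop := is_adinkra /\ #|V| = 2 ^ N.

(* Automorphism: permutation preserving adjacency, colours, the bipartition,
   and which becomes parity preserving after switching some vertex set S
   (switching S flips the parity of edge uw once for each endpoint in S). *)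
Definition is_aut (s : {perm V}) : bool :=
  [&& [forall u, forall w, adj (s u) (s w) == adj u w],
      [forall u, boson (s u) == boson u],
      [forall u, forall w, adj u w ==> (col (s u) (s w) == col u w)] &
      [exists S : {set V}, forall u, forall w,
         adj u w ==> (pi (s u) (s w) == (pi u w (+) (u \in S) (+) (w \in S)))]].

Definition AdinkraAut : {set {perm V}} := [set s | is_aut s].

End Adinkra.

(* Main.v *)
Require Import Defs.
From mathcomp Require Import all_boot all_fingroup.
From mathcomp Require Import zify.
Set Implicit Arguments. Unset Strict Implicit. Unset Printing Implicit Defensive.

Section A.
Variables (V : finType) (N : nat).
Variables (adj : rel V) (boson : pred V) (col : V -> V -> 'I_N) (pi : V -> V -> bool).
Hypothesis Hsym : symmetric adj.
Hypothesis Hconn : forall u w, connect adj u w.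
Hypothesis Hbip : forall u w, adj u w -> boson u != boson w.
Hypothesis Hcols : forall u w, adj u w -> col u w = col w u.
Hypothesis Hcolu : forall (v : V) (i : 'I_N), exists! w, adj v w /\ col v w = i.
Hypothesis Hpar : forall u w, adj u w -> pi u w = pi w u.
Hypothesis Hsq : forall (u v w : V) (i j : 'I_N), i != j ->
    adj u v -> adj v w -> col u v = i -> col v w = j ->
    exists! x, [/\ adj w x, col w x = i, adj x u & col x u = j].
Hypothesis Hodd : forall (u v w x : V) (i j : 'I_N), i != j ->
    adj u v -> adj v w -> adj w x -> adj x u ->
    col u v = i -> col v w = j -> col w x = i -> col x u = j ->
    odd (pi u v + pi v w + pi w x + pi x u).
Hypothesis Hcard : #|V| = 2 ^ N.

Definition q (i : 'I_N) (v : V) : V := odflt v [pick w | adj v w && (col v w == i)].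

Lemma qP i v : adj v (q i v) /\ col v (q i v) = i.
Proof.
rewrite /q; case: pickP => [w /andP [H /eqP E] //|H].
have [w [[Hw Ew] _]] := Hcolu v i.
by move: (H w); rewrite Hw Ew eqxx.
Qed.

Lemma q_uniq v w : adj v w -> w = q (col v w) v.
Proof.
move=> H; have [x [_ Hx]] := Hcolu v (col v w).
have [A B] := qP (col v w) v.
exact: (etrans (esym (Hx w (conj H erefl))) (Hx _ (conj A B))).
Qed.

Lemma q_adj i v : adj v (q i v). Proof. by case: (qP i v). Qed.
Lemma q_col i v : col v (q i v) = i. Proof. by case: (qP i v). Qed.

Lemma qK i v : q i (q i v) = v.
Proof.
have H : adj (q i v) v by rewrite Hsym q_adj.
have E := q_uniq H.
have C : col (q i v) v = i by rewrite -Hcols ?q_col ?q_adj.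
by rewrite C in E.
Qed.

Lemma q_inj i : injective (q i).
Proof. exact: can_inj (qK i). Qed.

Lemma qC i j v : q i (q j v) = q j (q i v).
Proof.
case: (eqVneq i j) => [->//|ne].
have [x [[A B C D] _]] := Hsq ne (q_adj i v) (q_adj j (q i v)) (q_col i v) (q_col j _).
have Avx : adj v x by rewrite Hsym.
have E1 : x = q j v.
  have E := q_uniq Avx.
  have C' : col v x = j by rewrite Hcols.
  by rewrite C' in E.
have E2 : x = q i (q j (q i v)).
  have E := q_uniq A.
  by rewrite B in E.
by rewrite -E1 E2 qK.
Qed.

Lemma boson_q i v : boson (q i v) = ~~ boson v.
Proof. by have := Hbip (q_adj i v); case: (boson v); case: (boson _). Qed.


Definition wk (s : seq 'I_N) (v : V) := foldl (fun v i => q i v) v s.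

Lemma wk_q s i v : q i (wk s v) = wk s (q i v).
Proof. by elim: s v => [|j s IH] v //=; rewrite IH qC. Qed.

Lemma wk_inj s : injective (wk s).
Proof.
elim: s => [|j s IH] //= x y E; apply: (q_inj (i:=j)); exact: IH.
Qed.

Lemma boson_wk s v : boson (wk s v) = boson v (+) odd (size s).
Proof.
elim: s v => [|j s IH] v /=; first by rewrite addbF.
by rewrite IH boson_q; case: (boson v); case: (odd _).
Qed.

Lemma path_wk u p : path adj u p -> exists s, last u p = wk s u.
Proof.
elim: p u => [|x p IH] u /=; first by exists [::].
case/andP => A P; have [s E] := IH x P.
by exists (col u x :: s); rewrite /= -(q_uniq A).
Qed.

Lemma conn_wk u w : exists s, w = wk s u.
Proof. by have /connectP [p P ->] := Hconn u w; exact: path_wk. Qed.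

Definition W (l : seq 'I_N) (X : {set 'I_N}) (v0 : V) :=
  foldr (fun j v => if j \in X then q j v else v) v0 l.
Definition tog (X : {set 'I_N}) i := if i \in X then X :\ i else i |: X.

Lemma in_tog j (X : {set 'I_N}) i : (j \in tog X i) = (j \in X) (+) (j == i).
Proof.
rewrite /tog; case: ifP => H; rewrite !inE; case: (eqVneq j i) => [->|] //=;
  by rewrite ?H ?addbF ?addbT.
Qed.

Lemma W_eq l (X Y : {set 'I_N}) (v0 : V) : {in l, forall j, (j \in X) = (j \in Y)} -> W l X v0 = W l Y v0.
Proof.
elim: l => [|j l IH] //= H; rewrite H ?mem_head // IH // => k Hk.
by apply: H; rewrite inE Hk orbT.
Qed.

Lemma W_tog l (X : {set 'I_N}) i (v0 : V) : uniq l -> i \in l -> q i (W l X v0) = W l (tog X i) v0.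
Proof.
elim: l => [|j l IH] //= /andP [nj ul]; rewrite inE; case: (eqVneq i j) => [->|ne] /= Hi.
  rewrite (@W_eq l (tog X j) X) ?in_tog ?eqxx; last first.
  move=> k Hk; rewrite in_tog; case: (eqVneq k j) => [E|]; last by rewrite addbF.
    by move: nj; rewrite -E Hk.
  by case: (j \in X) => //=; rewrite qK.
rewrite in_tog eq_sym (negbTE ne) addbF -IH //.
  by case: (j \in X) => //; rewrite qC.
Qed.

Lemma W_set0 l v0 : W l set0 v0 = v0.
Proof. by elim: l => //= j l ->; rewrite inE. Qed.

Lemma coords (v0 : V) : exists c : V -> {set 'I_N},
  forall x i k, (k \in c (q i x)) = (k \in c x) (+) (k == i).
Proof.
pose Phi X := W (enum 'I_N) X v0.
have Ptog X i : q i (Phi X) = Phi (tog X i).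
  by rewrite /Phi W_tog ?enum_uniq ?mem_enum.
pose a := [pred v | [exists X, Phi X == v]].
have imp x y : adj x y -> x \in a -> y \in a.
  move=> A /existsP [X /eqP E]; apply/existsP; exists (tog X (col x y)).
  by rewrite -Ptog E -q_uniq.
have cl : closed adj a.
  move=> x y A; apply/idP/idP; first exact: imp.
  by apply: imp; rewrite Hsym.
have surj v : v \in a.
  rewrite -(closed_connect cl (Hconn v0 v)); apply/existsP; exists set0.
  by rewrite /Phi W_set0.
pose c v := odflt set0 [pick X | Phi X == v].
have Pc v : Phi (c v) = v.
  rewrite /c; case: pickP => [X /eqP //|H].
  by have /existsP [X E] := surj v; rewrite H in E.
have c_inj : injective c by apply: (can_inj Pc).
have onto X : exists v, X = c v.
  have : X \in codom c.
    apply: inj_card_onto => //.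
    by rewrite -cardsT -powersetT card_powerset cardsT card_ord Hcard.
  by case/codomP => v ->; exists v.
have Phi_inj : injective Phi.
  move=> X Y; have [x ->] := onto X; have [y ->] := onto Y => E.
  by rewrite !Pc in E; rewrite E.
exists c => x i k.
have -> : c (q i x) = tog (c x) i by apply: Phi_inj; rewrite Pc -Ptog Pc.
by rewrite in_tog.
Qed.


Lemma cobound (v0 : V) (d : V -> 'I_N -> bool) :
  (forall x i, d (q i x) i = d x i) ->
  (forall x i j, i != j ->
     d x i (+) d (q i x) j (+) d (q j (q i x)) i (+) d (q j x) j = false) ->
  exists S : V -> bool, forall x i, d x i = S x (+) S (q i x).
Proof.
move=> dsym dcoc; have [c Hc] := coords v0.
suff H : forall k, k <= N -> exists S : V -> bool,
    forall x (i : 'I_N), i < k -> d x i = S x (+) S (q i x).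
  by have [S HS] := H N (leqnn N); exists S => x i; apply: HS.
elim => [|k IH] kN.
  by exists (fun _ => false).
have [S HS] := IH (ltnW kN).
pose K := Ordinal kN.
pose e x := d x K (+) S x (+) S (q K x).
pose T x := (K \in c x) && e x.
exists (fun x => S x (+) T x) => x i; rewrite ltnS leq_eqVlt; case/orP.
  move=> /eqP Ei; have -> : i = K by apply: val_inj.
  have bK : (K \in c (q K x)) = ~~ (K \in c x) by rewrite Hc eqxx addbT.
  have eK : e (q K x) = e x by rewrite /e qK dsym; case: (S x); case: (S (q K x)); case: (d x K).
  rewrite /T bK eK /e; case: (K \in c x); case: (S x); case: (S (q K x)); case: (d x K) => //.
move=> ik.
have ne : i != K by rewrite -val_eqE /= neq_ltn ik.
have bi : (K \in c (q i x)) = (K \in c x) by rewrite Hc eq_sym (negbTE ne) addbF.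
have ei : e (q i x) = e x.
  have C := dcoc x i K ne.
  have H1 := HS x i ik.
  have H2 := HS (q K x) i ik.
  rewrite /e; rewrite [q K (q i x)]qC in C *.
  rewrite [d (q i (q K x)) i]dsym (dsym x K) in C.
  move: C H1 H2; move: (d x i) (d (q i x) K) (d (q K x) i) (d x K) (S x) (S (q i x)) (S (q K x)) (S (q i (q K x))).
  by do 8!case.
have H1 := HS x i ik.
rewrite /T bi ei H1; case: (S x); case: (S (q i x)); case: (K \in c x); case: (e x) => //.
Qed.

Lemma sq_odd y (i j : 'I_N) : i != j ->
  pi y (q i y) (+) pi (q i y) (q j (q i y)) (+) pi (q j (q i y)) (q j y) (+) pi (q j y) y.
Proof.
move=> ne.
have A3 : adj (q j (q i y)) (q j y) by rewrite qC Hsym q_adj.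
have C3 : col (q j (q i y)) (q j y) = i by rewrite qC -Hcols ?q_col // q_adj.
have A4 : adj (q j y) y by rewrite Hsym q_adj.
have C4 : col (q j y) y = j by rewrite -Hcols ?q_col // q_adj.
have := Hodd ne (q_adj i y) (q_adj j _) A3 A4 (q_col i y) (q_col j _) C3 C4.
by rewrite !oddD !oddb.
Qed.

Lemma aut_q s : is_aut adj boson col pi s -> forall i u, s (q i u) = q i (s u).
Proof.
case/and4P => /forallP Ha _ /forallP Hco _ i u.
have A : adj (s u) (s (q i u)) by rewrite (eqP (forallP (Ha u) (q i u))) q_adj.
have C : col (s u) (s (q i u)) = i.
  by rewrite (eqP (implyP (forallP (Hco u) (q i u)) (q_adj i u))) q_col.
by rewrite {1}(q_uniq A) C.
Qed.

Lemma aut_eq (s s' : {perm V}) v :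
  (forall i u, s (q i u) = q i (s u)) -> (forall i u, s' (q i u) = q i (s' u)) ->
  s v = s' v -> s = s'.
Proof.
move=> Hs Hs' E; pose a := [pred u | s u == s' u].
have imp x y : adj x y -> x \in a -> y \in a.
  by move=> A /eqP Ex; rewrite inE (q_uniq A) Hs Hs' Ex.
have cl : closed adj a.
  move=> x y A; apply/idP/idP; first exact: imp.
  by apply: imp; rewrite Hsym.
apply/permP => u; apply/eqP.
by have := closed_connect cl (Hconn v u); rewrite !inE E eqxx => <-.
Qed.

Lemma qiji i j x : q i (q j (q i x)) = q j x.
Proof. by rewrite [q j (q i x)]qC qK. Qed.

Lemma trans u w : boson u = boson w -> exists2 s, is_aut adj boson col pi s & s u = w.
Proof.
move=> Eb; have [sq Hw] := conn_wk u w.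
pose t := perm (@wk_inj sq).
have tE x : t x = wk sq x by rewrite permE.
have tq i x : t (q i x) = q i (t x) by rewrite !tE wk_q.
have odd0 : odd (size sq) = false.
  by move: Eb; rewrite Hw boson_wk; case: (boson u); case: (odd _).
have tb x : boson (t x) = boson x by rewrite tE boson_wk odd0 addbF.
pose d x i := pi (t x) (t (q i x)) (+) pi x (q i x).
have dsym x i : d (q i x) i = d x i.
  rewrite /d qK tq (Hpar (q_adj i x)) (Hpar (q_adj i (t x))) //.
have dcoc x i j : i != j ->
     d x i (+) d (q i x) j (+) d (q j (q i x)) i (+) d (q j x) j = false.
  move=> ne; rewrite /d !tq !qiji ?tq !qK.
  have := sq_odd x ne; have := sq_odd (t x) ne.
  move: (pi (t x) _) (pi (q i (t x)) _) (pi (q j (q i (t x))) _) (pi (q j (t x)) _).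
  move: (pi x _) (pi (q i x) _) (pi (q j (q i x)) _) (pi (q j x) _).
  by do 8!case.
have [S HS] := cobound u dsym dcoc.
exists t; last by rewrite tE.
apply/and4P; split.
- apply/forallP => x; apply/forallP => y; apply/eqP; apply/idP/idP => A.
    have E : t y = t (q (col (t x) (t y)) x) by rewrite tq -q_uniq.
    by rewrite (perm_inj E) q_adj.
  by rewrite (q_uniq A) tq q_adj.
- by apply/forallP => x; rewrite tb.
- apply/forallP => x; apply/forallP => y; apply/implyP => A.
  by rewrite (q_uniq A) tq !q_col.
- apply/existsP; exists [set x | S x]; apply/forallP => x; apply/forallP => y.
  apply/implyP => A; rewrite !inE (q_uniq A).
  have := HS x (col x y); rewrite /d.
  by move: (pi (t x) _) (pi x _) (S x) (S (q _ x)) => a b c e; case: a; case: b; case: c; case: e.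
Qed.


Lemma main_sec : 0 < N ->
  [/\ (forall u w : V, boson u = boson w ->
         exists2 s, s \in AdinkraAut adj boson col pi & s u = w),
      (forall s : {perm V}, s \in AdinkraAut adj boson col pi ->
         forall v : V, s v = v -> s = 1%g)
    & #|AdinkraAut adj boson col pi| = 2 ^ N.-1].
Proof.
move=> N0.
have P1 : forall u w : V, boson u = boson w ->
         exists2 s, s \in AdinkraAut adj boson col pi & s u = w.
  by move=> u w E; have [s Hs Hu] := trans E; exists s; rewrite ?inE.
have one_q i u : (1%g : {perm V}) (q i u) = q i ((1%g : {perm V}) u) by rewrite !perm1.
split => //.
  move=> s; rewrite inE => Hs v Hv.
  by apply: (aut_eq (v:=v) (aut_q Hs) one_q); rewrite perm1.
have : 0 < #|V| by rewrite Hcard expn_gt0.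
case/card_gt0P => v0 _.
pose B := [set w | boson w == boson v0].
have IM : [set (s : {perm V}) v0 | s in AdinkraAut adj boson col pi] = B.
  apply/setP => w; rewrite inE; apply/imsetP/eqP.
    case=> s; rewrite inE => /and4P [_ /forallP Hb _ _] ->.
    exact: (eqP (Hb v0)).
  by move=> E; have [s Hs Hu] := P1 v0 w (esym E); exists s.
have -> : #|AdinkraAut adj boson col pi| = #|B|.
  rewrite -IM card_in_imset //.
  move=> s s'; rewrite !inE => Hs Hs' E.
  exact: (aut_eq (aut_q Hs) (aut_q Hs') E).
pose i0 := Ordinal N0.
have EC : [set q i0 x | x in B] = ~: B.
  apply/setP => w; rewrite !inE; apply/imsetP/idP.
    by case=> x; rewrite inE => /eqP Ex ->; rewrite boson_q Ex; case: (boson v0).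
  move=> Hw; exists (q i0 w); last by rewrite qK.
  by rewrite inE boson_q; move: Hw; case: (boson w); case: (boson v0).
have := cardsC B; rewrite -EC card_imset; last exact: q_inj.
rewrite Hcard; case: N N0 {i0 EC} => // n _ /=.
rewrite expnS => H; lia.
Qed.

End A.

Theorem mainTheorem4 (V : finType) (N : nat) (adj : rel V) (boson : pred V)
    (col : V -> V -> 'I_N) (pi : V -> V -> bool) :
  0 < N ->
  is_Ncube_adinkra adj boson col pi ->
  [/\ (forall u w : V, boson u = boson w ->
         exists2 s, s \in AdinkraAut adj boson col pi & s u = w),
      (forall s : {perm V}, s \in AdinkraAut adj boson col pi ->
         forall v : V, s v = v -> s = 1%g)
    & #|AdinkraAut adj boson col pi| = 2 ^ N.-1].
Proof.
move=> N0 [[[[Hsym _] Hc Hb [Hcs Hcu] Hp] [Hs Ho]] Hcard].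
exact: (main_sec Hsym Hc Hb Hcs Hcu Hp Hs Ho Hcard N0).
Qed.
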